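(* Let $c = 1.40759\ldots$ denote the largest real root of $x^6 - 2x^2 - 2x - 1 = 0$ (note $c < \sqrt{2}$). For all integers $n \ge 1$ and $t$ with $0 \le t \le n/2$, every triangle-free graph $G$ on $n$ vertices that contains no induced matching of size $t+1$ satisfies \[ \mathrm{mis}(G) \le 2^t c^{\,n-2t}. \] That is, $\mathrm{mis}_{\triangle,t}(n) \le 2^t c^{n-2t}$.
   Context: All graphs are finite and simple. For a graph $G$, $\mathrm{mis}(G)$ denotes the number of maximal independent sets of $G$. An induced matching in $G$ is a set of pairwise vertex-disjoint edges of $G$ such that the subgraph induced by their endpoints consists of exactly these edges; its size is the number of edges. $\mathrm{mis}_{\triangle,t}(n)$ denotes the maximum of $\mathrm{mis}(G)$ over all $n$-vertex triangle-free graphs $G$ containing no induced matching of size $t+1$. *)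

(* Defs.v *)
From HB Require Import structures.
From mathcomp Require Import all_boot all_order all_algebra.
From mathcomp Require Import reals.
Set Implicit Arguments. Unset Strict Implicit. Unset Printing Implicit Defensive.

Definition simple_graph (T : finType) (e : rel T) :=
  symmetric e /\ irreflexive e.

Definition triangle_free (T : finType) (e : rel T) :=
  forall x y z : T, ~~ [&& e x y, e y z & e x z].

Definition independent (T : finType) (e : rel T) (S : {set T}) : bool :=
  [forall x in S, forall y in S, ~~ e x y].

Definition maximal_independent (T : finType) (e : rel T) (S : {set T}) : bool :=
  independent e S &&
  [forall S' : {set T}, (S \proper S') ==> ~~ independent e S'].

Definition mis (T : finType) (e : rel T) : nat :=
  #|[set S : {set T} | maximal_independent e S]|.

Definition induced_matching (T : finType) (e : rel T) (M : {set {set T}}) : bool :=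
  [forall E in M, exists u, exists v, (E == [set u; v]) && e u v] &&
  [forall E1 in M, forall E2 in M, (E1 != E2) ==> [disjoint E1 & E2]] &&
  [forall x in cover M, forall y in cover M, e x y ==> ([set x; y] \in M)].

Definition has_induced_matching_of_size (T : finType) (e : rel T) (k : nat) :=
  exists M : {set {set T}}, induced_matching e M && (#|M| == k).

(* Main.v *)
Require Import Defs.
From HB Require Import structures.
From mathcomp Require Import all_boot all_order all_algebra.
From mathcomp Require Import reals.
From mathcomp Require Import ring lra zify.
Import Order.TTheory GRing.Theory Num.Theory.
Set Implicit Arguments. Unset Strict Implicit. Unset Printing Implicit Defensive.

Definition dom (T : finType) (e : rel T) (A S : {set T}) : bool :=
  [&& S \subset A, independent e S &
      [forall x in A, (x \in S) || [exists y in S, e x y]]].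
Definition misA (T : finType) (e : rel T) (A : {set T}) := #|[set S | dom e A S]|.
Definition nclo (T : finType) (e : rel T) (I : {set T}) : {set T} :=
  I :|: [set y | [exists i in I, e i y]].

Lemma independentP (T : finType) (e : rel T) (S : {set T}) :
  reflect (forall x y, x \in S -> y \in S -> ~~ e x y) (independent e S).
Proof.
apply: (iffP forallP) => [h x y xS yS | h x].
  by move/forall_inP: (implyP (h x) xS) => /(_ y yS).
by apply/implyP => xS; apply/forall_inP => y yS; apply: h.
Qed.

Lemma domP (T : finType) (e : rel T) (A S : {set T}) :
  reflect [/\ S \subset A, (forall x y, x \in S -> y \in S -> ~~ e x y) &
     forall x, x \in A -> x \notin S -> exists2 y, y \in S & e x y]
   (dom e A S).
Proof.
apply: (iffP and3P) => [[h1 /independentP h2 /forall_inP h3] | [h1 h2 h3]].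
  split => // x xA xS; move: (h3 x xA); rewrite (negbTE xS) /=.
  by case/exists_inP => y; exists y.
split => //; first by apply/independentP.
apply/forall_inP => x xA; case: (boolP (x \in S)) => //= xS.
by case: (h3 x xA xS) => y yS exy; apply/exists_inP; exists y.
Qed.

Lemma mis_misA (T : finType) (e : rel T) : simple_graph e -> mis e = misA e setT.
Proof.
move=> [hsym hirr]; rewrite /mis /misA; apply: eq_card => S; rewrite !inE.
apply/idP/idP.
  case/andP => /independentP hi /forallP hm; apply/domP; do ! split => //.
  move=> x _ xS; have := implyP (hm (x |: S)).
  have hp : S \proper x |: S.
    by apply/properP; split; [exact: subsetUr | exists x; rewrite ?inE ?eqxx].
  rewrite hp => /(_ isT) /negP hn.
  have : [exists y in S, e x y]; last by case/exists_inP => y; exists y.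
  case: (boolP [exists y in S, e x y]) => // hno; exfalso.
  apply: hn; apply/independentP => a b.
  rewrite !inE => /predU1P [-> | aS] /predU1P [-> | bS].
  - by rewrite hirr.
  - by apply: contra hno => h; apply/exists_inP; exists b.
  - by rewrite hsym; apply: contra hno => h; apply/exists_inP; exists a.
  - by apply: hi.
case/domP => _ hi hd; apply/andP; split; first by apply/independentP.
apply/forallP => S'; apply/implyP => /properP [sSS' [x xS' xS]].
apply/negP => /independentP hi'.
case: (hd x (in_setT x) xS) => y yS exy.
by move: (hi' x y xS' (subsetP sSS' y yS)); rewrite exy.
Qed.

Lemma branch (T : finType) (e : rel T) (hsym : symmetric e) (A I X : {set T}) :
  independent e I ->
  #|[set S | dom e A S && ((I \subset S) && [disjoint S & X])]|
    <= misA e (A :\: nclo e I :\: X).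
Proof.
move=> /independentP hI.
set B := [set S | _].
have inj : {in B &, injective (fun S => S :\: I)}.
  move=> S1 S2; rewrite !inE => /and3P[_ h1 _] /and3P[_ h2 _] eq.
  by rewrite -(setID S1 I) -(setID S2 I) eq (setIidPr h1) (setIidPr h2).
rewrite -(card_in_imset inj); apply: subset_leq_card; apply/subsetP => _ /imsetP [S SB ->].
rewrite inE; move: SB; rewrite inE => /and3P [/domP [sA hi hd] /subsetP IS dX].
have nI x : x \in S -> x \notin I -> x \notin nclo e I.
  move=> xS xI; rewrite !inE negb_or xI /=.
  by apply/negP => /exists_inP [i iI eix]; move: (hi i x (IS i iI) xS); rewrite eix.
apply/domP; split.
- apply/subsetP => x; rewrite !in_setD => /andP [xI xS].
  by rewrite (disjointFr dX xS) (negbTE (nI x xS xI)) (subsetP sA x xS).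
- by move=> x y; rewrite !in_setD => /andP[_ xS] /andP[_ yS]; apply: hi.
move=> x; rewrite !in_setD => /and3P [xX xN xA] hx.
have xI : x \notin I by apply: contra xN => xI; rewrite inE xI.
have xS : x \notin S by move: hx; rewrite xI.
case: (hd x xA xS) => y yS exy; exists y => //.
rewrite in_setD yS andbT; apply/negP => yI; move: xN; rewrite !inE negb_or => /andP [_].
by move/negP; apply; apply/exists_inP; exists y; rewrite // hsym.
Qed.

Lemma cover2 (T : finType) (e : rel T) (A : {set T}) (B1 B2 : {set {set T}}) :
  (forall S, dom e A S -> (S \in B1) || (S \in B2)) -> misA e A <= #|B1| + #|B2|.
Proof.
move=> h; apply: (leq_trans (n := #|B1 :|: B2|)).
  by apply: subset_leq_card; apply/subsetP => S; rewrite !inE => /h.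
by rewrite cardsU leq_subr.
Qed.

Lemma cover3 (T : finType) (e : rel T) (A : {set T}) (B1 B2 B3 : {set {set T}}) :
  (forall S, dom e A S -> [|| S \in B1, S \in B2 | S \in B3]) ->
  misA e A <= #|B1| + #|B2| + #|B3|.
Proof.
move=> h; apply: (leq_trans (n := #|B1 :|: B2 :|: B3|)).
  by apply: subset_leq_card; apply/subsetP => S; rewrite !inE => /h; rewrite orbA.
by rewrite cardsU (leq_trans (leq_subr _ _)) // leq_add2r cardsU leq_subr.
Qed.

Lemma size_branch (T : finType) (e : rel T) (A I X D : {set T}) :
  D \subset A -> D \subset nclo e I :|: X ->
  #|A :\: nclo e I :\: X| + #|D| <= #|A|.
Proof.
move=> DA DN.
have sub : A :\: nclo e I :\: X \subset A :\: D.
  apply/subsetP => x; rewrite !in_setD => /and3P [xX xN xA]; rewrite xA andbT.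
  by apply: contra (negbT (orbF _)) => xD; move: (subsetP DN x xD); rewrite in_setU (negbTE xX) (negbTE xN).
have h1 := subset_leq_card sub; have h2 := subset_leq_card DA.
rewrite (cardsDS DA) in h1.
lia.
Qed.

Lemma nclo1 (T : finType) (e : rel T) v y : (y \in nclo e [set v]) = (y == v) || e v y.
Proof.
rewrite !inE; congr (_ || _); apply/exists_inP/idP => [[i] | h].
  by rewrite inE => /eqP ->.
by exists v; rewrite ?inE.
Qed.

Definition noIM (T : finType) (e : rel T) (A : {set T}) (t : nat) :=
  forall M, induced_matching e M -> cover M \subset A -> #|M| != t.+1.

Lemma noIM_sub (T : finType) (e : rel T) (A B : {set T}) t :
  B \subset A -> noIM e A t -> noIM e B t.
Proof. by move=> BA h M hM cB; apply: h => //; apply: subset_trans cB BA. Qed.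

Lemma imP (T : finType) (e : rel T) (M : {set {set T}}) :
  reflect [/\ forall E, E \in M -> exists u v, E = [set u; v] /\ e u v,
     forall E1 E2, E1 \in M -> E2 \in M -> E1 != E2 -> [disjoint E1 & E2] &
     forall x y, x \in cover M -> y \in cover M -> e x y -> [set x; y] \in M]
   (induced_matching e M).
Proof.
apply: (iffP andP) => [[/andP [/forall_inP h1 /forall_inP h2] /forall_inP h3] | [h1 h2 h3]].
  split.
  - move=> E /h1 /existsP [u /existsP [v /andP [/eqP -> euv]]]; by exists u, v.
  - by move=> E1 E2 /h2 /forall_inP h E2M; move/implyP: (h E2 E2M).
  - by move=> x y /h3 /forall_inP h yM; move/implyP: (h y yM).
split; first (apply/andP; split).
- apply/forall_inP => E /h1 [u [v [-> euv]]]; apply/existsP; exists u; apply/existsP; exists v.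
  by rewrite eqxx.
- by apply/forall_inP => E1 E1M; apply/forall_inP => E2 E2M; apply/implyP; apply: h2.
- by apply/forall_inP => x xM; apply/forall_inP => y yM; apply/implyP; apply: h3.
Qed.

Lemma disjP (T : finType) (A B : {set T}) :
  (forall x, x \in A -> x \in B -> False) -> [disjoint A & B].
Proof.
move=> h; rewrite disjoint_subset; apply/subsetP => x xA; rewrite !inE.
by apply/negP => /(h x xA).
Qed.

Lemma iso_edge (T : finType) (e : rel T) (hsym : symmetric e) (hirr : irreflexive e)
  (A : {set T}) u v t :
  u \in A -> v \in A -> e u v ->
  (forall y, y \in A -> e u y -> y = v) -> (forall y, y \in A -> e v y -> y = u) ->
  noIM e A t -> exists2 t', t = t'.+1 & noIM e (A :\: [set u; v]) t'.
Proof.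
move=> uA vA euv hu hv hA.
have uv : u != v by apply: contraTneq euv => ->; rewrite hirr.
have pair x y : x \in [set u; v] -> y \in [set u; v] -> e x y -> [set x; y] = [set u; v].
  rewrite !inE => /orP [] /eqP -> /orP [] /eqP ->; rewrite ?hirr // => _.
  by rewrite setUC.
case: t hA => [|t'] hA.
  suff [h1 h2] : induced_matching e [set [set u; v]] /\ cover [set [set u; v]] \subset A.
    by move: (hA _ h1 h2); rewrite cards1.
  split.
  - apply/imP; split.
    + by move=> E; rewrite inE => /eqP ->; exists u, v.
    + by move=> E1 E2; rewrite !inE => /eqP -> /eqP ->; rewrite eqxx.
    + move=> x y; rewrite /cover big_set1 => xE yE exy; rewrite inE; apply/eqP; exact: pair.
  - by rewrite /cover big_set1; apply/subsetP => x; rewrite !inE => /orP [] /eqP ->.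
exists t' => // M hM cM; apply/negP => /eqP sM.
set E0 := [set u; v].
have cover_notin x : x \in cover M -> x \in A /\ x \notin E0.
  by move/(subsetP cM); rewrite in_setD => /andP [h1 h2].
have E0M : E0 \notin M.
  apply/negP => E0M; have := cover_notin u; rewrite !inE eqxx /= => h.
  by case: h => //; apply/bigcupP; exists E0; rewrite // !inE eqxx.
have covU x : x \in cover (E0 |: M) = (x \in E0) || (x \in cover M).
  by rewrite /cover bigcup_setU big_set1 in_setU.
suff [h1 h2] : induced_matching e (E0 |: M) /\ cover (E0 |: M) \subset A.
  by move: (hA _ h1 h2); rewrite cardsU1 E0M sM add1n eqxx.
split.
- case/imP: hM => h1 h2 h3; apply/imP; split.
  + move=> E; rewrite in_setU1 => /predU1P [-> | /h1 //]; by exists u, v.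
  + move=> E1 E2; rewrite !in_setU1 => /predU1P [-> | E1M] /predU1P [-> | E2M];
      rewrite ?eqxx //; last by apply: h2.
    * move=> _; rewrite disjoint_sym; apply: disjP => x xE2 xE0.
      have : x \in cover M by apply/bigcupP; exists E2.
      by case/cover_notin => _; rewrite xE0.
    * move=> _; apply: disjP => x xE2 xE0.
      have : x \in cover M by apply/bigcupP; exists E1.
      by case/cover_notin => _; rewrite xE0.
  + move=> x y; rewrite !covU => /orP [xE | xM] /orP [yE | yM] exy.
    * by rewrite (pair x y) // setU11.
    * exfalso; case: (cover_notin y yM) => yA yE0.
      move: xE; rewrite !inE => /orP [] /eqP xe; subst x.
        by move: yE0; rewrite (hu y yA exy) !inE eqxx orbT.
      by move: yE0; rewrite (hv y yA exy) !inE eqxx.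
    * exfalso; case: (cover_notin x xM) => xA xE0; rewrite hsym in exy.
      move: yE; rewrite !inE => /orP [] /eqP ye; subst y.
        by move: xE0; rewrite (hu x xA exy) !inE eqxx orbT.
      by move: xE0; rewrite (hv x xA exy) !inE eqxx.
    * by rewrite setU1r //; apply: h3.
- rewrite /cover bigcup_setU big_set1; apply/subsetP => x; rewrite in_setU => /orP [xE | xM].
    by move: xE; rewrite !inE => /orP [] /eqP ->.
  by case: (cover_notin x xM).
Qed.

Definition brset (T : finType) (e : rel T) (A I X : {set T}) :=
  A :\: nclo e I :\: X.

Lemma two_branch (T : finType) (e : rel T) (hsym : symmetric e) (A I1 X1 I2 X2 : {set T}) :
  independent e I1 -> independent e I2 ->
  (forall S, dom e A S -> ((I1 \subset S) && [disjoint S & X1]) || ((I2 \subset S) && [disjoint S & X2])) ->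
  misA e A <= misA e (brset e A I1 X1) + misA e (brset e A I2 X2).
Proof.
move=> h1 h2 h.
apply: leq_trans (cover2 (B1 := [set S | dom e A S && ((I1 \subset S) && [disjoint S & X1])])
   (B2 := [set S | dom e A S && ((I2 \subset S) && [disjoint S & X2])]) _) _.
  by move=> S hS; rewrite !inE hS /=; apply: h.
by apply: leq_add; apply: branch.
Qed.

Lemma three_branch (T : finType) (e : rel T) (hsym : symmetric e) (A I1 X1 I2 X2 I3 X3 : {set T}) :
  independent e I1 -> independent e I2 -> independent e I3 ->
  (forall S, dom e A S -> [|| (I1 \subset S) && [disjoint S & X1],
        (I2 \subset S) && [disjoint S & X2] | (I3 \subset S) && [disjoint S & X3]]) ->
  misA e A <= misA e (brset e A I1 X1) + misA e (brset e A I2 X2) + misA e (brset e A I3 X3).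
Proof.
move=> h1 h2 h3 h.
apply: leq_trans (cover3 (B1 := [set S | dom e A S && ((I1 \subset S) && [disjoint S & X1])])
   (B2 := [set S | dom e A S && ((I2 \subset S) && [disjoint S & X2])])
   (B3 := [set S | dom e A S && ((I3 \subset S) && [disjoint S & X3])]) _) _.
  by move=> S hS; rewrite !inE hS /=; apply: h.
by rewrite !leq_add //; apply: branch.
Qed.

Lemma one_branch (T : finType) (e : rel T) (hsym : symmetric e) (A I1 X1 : {set T}) :
  independent e I1 ->
  (forall S, dom e A S -> (I1 \subset S) && [disjoint S & X1]) ->
  misA e A <= misA e (brset e A I1 X1).
Proof.
move=> h1 h; apply: leq_trans (branch hsym A X1 h1).
by apply: subset_leq_card; apply/subsetP => S; rewrite !inE => hS; rewrite hS h.
Qed.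

Lemma indep1 (T : finType) (e : rel T) (hirr : irreflexive e) v : independent e [set v].
Proof. by apply/independentP => x y; rewrite !inE => /eqP -> /eqP ->; rewrite hirr. Qed.

Lemma indep0 (T : finType) (e : rel T) : independent e set0.
Proof. by apply/independentP => x y; rewrite inE. Qed.

Lemma brset_sub (T : finType) (e : rel T) (A I X : {set T}) : brset e A I X \subset A.
Proof. by apply/subsetP => x; rewrite !in_setD => /and3P []. Qed.

Lemma misA0 (T : finType) (e : rel T) : misA e set0 = 1.
Proof.
rewrite /misA -(cards1 (set0 : {set T})); apply: eq_card => S; rewrite !inE.
apply/idP/eqP => [/domP [h _ _] | ->]; first by apply/eqP; rewrite -subset0.
by apply/domP; split; [apply/subsetP => x; rewrite inE | move=> x y; rewrite inE | move=> x; rewrite inE].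
Qed.

Definition nbA (T : finType) (e : rel T) (A : {set T}) x := [set y in A | e x y].

Lemma disj0 (T : finType) (S : {set T}) : [disjoint S & set0].
Proof. by apply: disjP => x _; rewrite inE. Qed.

Lemma disj1 (T : finType) (S : {set T}) a : a \notin S -> [disjoint S & [set a]].
Proof. by move=> aS; apply: disjP => x xS; rewrite inE => /eqP xa; move: aS; rewrite -xa xS. Qed.

Lemma case_deg3 (T : finType) (e : rel T) (hsym : symmetric e) (hirr : irreflexive e)
  (A : {set T}) v : v \in A -> 3 <= #|nbA e A v| ->
  [/\ misA e A <= misA e (brset e A [set v] set0) + misA e (brset e A set0 [set v]),
      #|brset e A [set v] set0| + 4 <= #|A| & #|brset e A set0 [set v]| + 1 <= #|A|].
Proof.
move=> vA h3; split.
- apply: two_branch => //; [exact: indep1 | exact: indep0 | ].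
  move=> S _; case: (boolP (v \in S)) => vS.
    by rewrite sub1set vS disj0.
  by rewrite sub0set disj1 ?orbT.
- have vN : v \notin nbA e A v by rewrite inE hirr andbF.
  apply: leq_trans (size_branch (e := e) (I := [set v]) (X := set0) (D := v |: nbA e A v) _ _).
  + by rewrite cardsU1 vN leq_add2l add1n ltnS.
  + by apply/subsetP => x; rewrite !inE => /orP [/eqP -> | /andP []].
  + apply/subsetP => x; rewrite in_setU1 inE in_setU nclo1 => /orP [/eqP -> | /andP [_ evx]].
      by rewrite eqxx.
    by rewrite evx orbT.
- apply: leq_trans (size_branch (e:=e) (I:=set0) (X:=[set v]) (D:=[set v]) _ _).
  + by rewrite cards1.
  + by rewrite sub1set.
  + by rewrite sub1set in_setU inE eqxx orbT.
Qed.

Lemma dom_nb (T : finType) (e : rel T) (A S : {set T}) x :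
  dom e A S -> x \in A -> x \notin S -> exists2 y, y \in S & y \in nbA e A x.
Proof.
case/domP => sA _ hd xA xS; case: (hd x xA xS) => y yS exy; exists y => //.
by rewrite inE (subsetP sA y yS) exy.
Qed.

Lemma nbA_in (T : finType) (e : rel T) (A : {set T}) x y :
  (y \in nbA e A x) = (y \in A) && e x y.
Proof. by rewrite inE. Qed.

Lemma size1 (T : finType) (e : rel T) (A I X : {set T}) a :
  a \in A -> a \in nclo e I :|: X -> #|brset e A I X| + 1 <= #|A|.
Proof.
move=> aA aN; apply: leq_trans (size_branch (e:=e) (I:=I) (X:=X) (D:=[set a]) _ _).
- by rewrite cards1.
- by rewrite sub1set.
- by rewrite sub1set.
Qed.

Lemma size2 (T : finType) (e : rel T) (A I X : {set T}) a b :
  a != b -> a \in A -> b \in A -> a \in nclo e I :|: X -> b \in nclo e I :|: X ->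
  #|brset e A I X| + 2 <= #|A|.
Proof.
move=> ab aA bA aN bN; apply: leq_trans (size_branch (e:=e) (I:=I) (X:=X) (D:=[set a; b]) _ _).
- by rewrite cards2 ab.
- by apply/subsetP => x; rewrite in_set2 => /orP [] /eqP ->.
- by apply/subsetP => x; rewrite in_set2 => /orP [] /eqP ->.
Qed.

Lemma size3 (T : finType) (e : rel T) (A I X : {set T}) a b c :
  a != b -> a != c -> b != c -> a \in A -> b \in A -> c \in A ->
  a \in nclo e I :|: X -> b \in nclo e I :|: X -> c \in nclo e I :|: X ->
  #|brset e A I X| + 3 <= #|A|.
Proof.
move=> ab ac bc aA bA cA aN bN cN.
apply: leq_trans (size_branch (e:=e) (I:=I) (X:=X) (D:=a |: [set b; c]) _ _).
- by rewrite cardsU1 cards2 !inE negb_or ab ac bc.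
- by apply/subsetP => x; rewrite in_setU1 in_set2 => /or3P [] /eqP ->.
- by apply/subsetP => x; rewrite in_setU1 in_set2 => /or3P [] /eqP ->.
Qed.

Lemma size4 (T : finType) (e : rel T) (A I X : {set T}) a b c d :
  a != b -> a != c -> a != d -> b != c -> b != d -> c != d ->
  a \in A -> b \in A -> c \in A -> d \in A ->
  a \in nclo e I :|: X -> b \in nclo e I :|: X -> c \in nclo e I :|: X -> d \in nclo e I :|: X ->
  #|brset e A I X| + 4 <= #|A|.
Proof.
move=> ab ac ad bc bd cd aA bA cA dA aN bN cN dN.
apply: leq_trans (size_branch (e:=e) (I:=I) (X:=X) (D:=a |: (b |: [set c; d])) _ _).
- by rewrite cardsU1 cardsU1 cards2 !inE !negb_or ab ac ad bc bd cd.
- by apply/subsetP => x; rewrite !in_setU1 in_set1 => /or4P [] /eqP ->.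
- by apply/subsetP => x; rewrite !in_setU1 in_set1 => /or4P [] /eqP ->.
Qed.

Lemma inN1 (T : finType) (e : rel T) (X : {set T}) u y :
  (y \in nclo e [set u] :|: X) = [|| y == u, e u y | y \in X].
Proof. by rewrite in_setU nclo1 orbA. Qed.

Lemma nb1P (T : finType) (e : rel T) (A : {set T}) u v :
  nbA e A u = [set v] -> [/\ v \in A, e u v & forall y, y \in A -> e u y -> y = v].
Proof.
move=> h; have : v \in nbA e A u by rewrite h set11.
rewrite nbA_in => /andP [vA euv]; split => // y yA euy.
have : y \in nbA e A u by rewrite nbA_in yA euy.
by rewrite h inE => /eqP.
Qed.

Lemma nb2P (T : finType) (e : rel T) (A : {set T}) u v w :
  nbA e A u = [set v; w] ->
  [/\ v \in A, e u v, w \in A, e u w & forall y, y \in A -> e u y -> (y == v) || (y == w)].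
Proof.
move=> h; have : v \in nbA e A u by rewrite h !inE eqxx.
have : w \in nbA e A u by rewrite h !inE eqxx orbT.
rewrite !nbA_in => /andP [wA euw] /andP [vA euv]; split => // y yA euy.
have : y \in nbA e A u by rewrite nbA_in yA euy.
by rewrite h !inE.
Qed.

Lemma case_deg0 (T : finType) (e : rel T) (hsym : symmetric e) (hirr : irreflexive e)
  (A : {set T}) v : v \in A -> nbA e A v = set0 ->
  misA e A <= misA e (brset e A [set v] set0) /\ #|brset e A [set v] set0| + 1 <= #|A|.
Proof.
move=> vA h0; split.
- apply: one_branch => //; first exact: indep1.
  move=> S hS; rewrite disj0 andbT sub1set; apply/negPn/negP => vS.
  by case: (dom_nb hS vA vS) => y _; rewrite h0 inE.
- by apply: (size1 (a := v)); rewrite // inN1 eqxx.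
Qed.

Lemma case_edge (T : finType) (e : rel T) (hsym : symmetric e) (hirr : irreflexive e)
  (A : {set T}) u v : u \in A -> nbA e A u = [set v] -> nbA e A v = [set u] ->
  [/\ misA e A <= misA e (brset e A [set u] set0) + misA e (brset e A [set v] set0),
      brset e A [set u] set0 \subset A :\: [set u; v],
      brset e A [set v] set0 \subset A :\: [set u; v],
      #|brset e A [set u] set0| + 2 <= #|A| & #|brset e A [set v] set0| + 2 <= #|A|].
Proof.
move=> uA /nb1P [vA euv hu] /nb1P [_ evu hv].
have uv : u != v by apply: contraTneq euv => ->; rewrite hirr.
split.
- apply: two_branch => //; [exact: indep1 | exact: indep1 |].
  move=> S hS; rewrite !disj0 !andbT !sub1set; case: (boolP (u \in S)) => //= uS.
  by case: (dom_nb hS uA uS) => y yS; rewrite nbA_in => /andP [yA /(hu y yA) <-].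
  rewrite /brset; apply/subsetP => x; rewrite !in_setD in_set0 /= nclo1 in_set2.
  case/andP => /norP [xu nux] ->; rewrite andbT negb_or xu /=.
  by apply: contraNneq nux => ->.
- rewrite /brset; apply/subsetP => x; rewrite !in_setD in_set0 /= nclo1 in_set2.
  case/andP => /norP [xv nvx] ->; rewrite andbT negb_or xv andbT.
  by apply: contraNneq nvx => ->.
- by apply: (size2 (a := u) (b := v)); rewrite // !inN1 ?eqxx ?euv ?orbT.
- by apply: (size2 (a := u) (b := v)); rewrite // !inN1 ?eqxx ?evu ?orbT.
Qed.

Lemma case_leaf (T : finType) (e : rel T) (hsym : symmetric e) (hirr : irreflexive e)
  (A : {set T}) u v w : u \in A -> nbA e A u = [set v] -> nbA e A v = [set u; w] -> w != u ->
  [/\ misA e A <= misA e (brset e A [set u] set0) + misA e (brset e A [set v] set0),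
      #|brset e A [set u] set0| + 2 <= #|A| & #|brset e A [set v] set0| + 3 <= #|A|].
Proof.
move=> uA /nb1P [vA euv hu] /nb2P [_ evu wA evw _] wu.
have uv : u != v by apply: contraTneq euv => ->; rewrite hirr.
have vw : v != w by apply: contraTneq evw => ->; rewrite hirr.
split.
- apply: two_branch => //; [exact: indep1 | exact: indep1 |].
  move=> S hS; rewrite !disj0 !andbT !sub1set; case: (boolP (u \in S)) => //= uS.
  by case: (dom_nb hS uA uS) => y yS; rewrite nbA_in => /andP [yA /(hu y yA) <-].
- by apply: (size2 (a := u) (b := v)); rewrite // !inN1 ?eqxx ?euv ?orbT.
- by apply: (size3 (a := u) (b := v) (c := w)); rewrite // 1?eq_sym // !inN1 ?eqxx ?evu ?evw ?orbT.
Qed.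

Lemma case_cycle (T : finType) (e : rel T) (hsym : symmetric e) (hirr : irreflexive e)
  (htri : triangle_free e)
  (A : {set T}) v a b a' b' : v \in A -> nbA e A v = [set a; b] -> a != b ->
  nbA e A a = [set v; a'] -> a' != v -> nbA e A b = [set v; b'] -> b' != v ->
  [/\ misA e A <= misA e (brset e A [set v] set0) + misA e (brset e A [set a] set0)
                  + misA e (brset e A [set b] [set a]),
      #|brset e A [set v] set0| + 3 <= #|A|,
      #|brset e A [set a] set0| + 3 <= #|A| &
      #|brset e A [set b] [set a]| + 4 <= #|A|].
Proof.
move=> vA /nb2P [aA eva bA evb hv] ab /nb2P [_ eav a'A eaa' _] a'v
   /nb2P [_ ebv b'A ebb' _] b'v.
have va : v != a by apply: contraTneq eva => ->; rewrite hirr.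
have vb : v != b by apply: contraTneq evb => ->; rewrite hirr.
have aa' : a != a' by apply: contraTneq eaa' => ->; rewrite hirr.
have bb' : b != b' by apply: contraTneq ebb' => ->; rewrite hirr.
have b'a : b' != a.
  apply: contraTneq ebb' => ->; apply/negP => eba; move: (htri v a b).
  by rewrite eva evb hsym eba.
split.
- apply: three_branch => //; [exact: indep1 | exact: indep1 | exact: indep1 |].
  move=> S hS; rewrite !disj0 !andbT !sub1set; case: (boolP (v \in S)) => //= vS.
  case: (boolP (a \in S)) => //= aS; rewrite disj1 // andbT.
  case: (dom_nb hS vA vS) => y yS; rewrite nbA_in => /andP [yA /(hv y yA)] /orP [] /eqP yE.
    by move: aS; rewrite -yE yS.
  by rewrite -yE.
- by apply: (size3 (a := v) (b := a) (c := b)); rewrite // !inN1 ?eqxx ?eva ?evb ?orbT.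
- apply: (size3 (a := a) (b := v) (c := a')); rewrite ?inN1 ?eqxx ?eav ?eaa' ?orbT //.
  1,2: by rewrite eq_sym.
- apply: (@size4 T e A [set b] [set a] b v b' a); rewrite ?inN1 ?inE ?eqxx ?ebv ?ebb' ?orbT //.
  all: by rewrite eq_sym.
Qed.

Lemma other (T : finType) (N : {set T}) v :
  #|N| == 2 -> v \in N -> exists2 w, w != v & N = [set v; w].
Proof.
case/cards2P => [x [y [xy ->]]]; rewrite in_set2 => /orP [] /eqP ->.
  by exists y; rewrite // eq_sym.
by exists x; rewrite // setUC.
Qed.

Lemma dichotomy (T : finType) (e : rel T) (hsym : symmetric e) (hirr : irreflexive e)
  (htri : triangle_free e) (A : {set T}) t : noIM e A t ->
  A = set0 \/
  (exists A1, [/\ noIM e A1 t, #|A1| + 1 <= #|A| & misA e A <= misA e A1]) \/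
  (exists A1 A2, [/\ noIM e A1 t, noIM e A2 t, #|A1| + 4 <= #|A| /\ #|A2| + 1 <= #|A|
       & misA e A <= misA e A1 + misA e A2]) \/
  (exists t' A1 A2, [/\ t = t'.+1, noIM e A1 t', noIM e A2 t',
       #|A1| + 2 <= #|A| /\ #|A2| + 2 <= #|A| & misA e A <= misA e A1 + misA e A2]) \/
  (exists A1 A2, [/\ noIM e A1 t, noIM e A2 t, #|A1| + 2 <= #|A| /\ #|A2| + 3 <= #|A|
       & misA e A <= misA e A1 + misA e A2]) \/
  (exists A1 A2 A3, [/\ noIM e A1 t, noIM e A2 t, noIM e A3 t,
       [/\ #|A1| + 3 <= #|A|, #|A2| + 3 <= #|A| & #|A3| + 4 <= #|A|]
       & misA e A <= misA e A1 + misA e A2 + misA e A3]).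
Proof.
move=> hA.
have sub I X : noIM e (brset e A I X) t by apply: noIM_sub (brset_sub _ _ _ _) hA.
case: (eqVneq A set0) => [->|nA]; [by left|right].
case: (boolP [exists v in A, 3 <= #|nbA e A v|]) => [/exists_inP [v vA h3] | no3].
  right; left; have [h1 h2 h3'] := case_deg3 hsym hirr vA h3.
  by exists (brset e A [set v] set0), (brset e A set0 [set v]); do ! split; try apply: sub.
have le2 v : v \in A -> #|nbA e A v| <= 2.
  by move=> vA; rewrite leqNgt; apply: contra no3 => h; apply/exists_inP; exists v.
case: (boolP [exists v in A, #|nbA e A v| == 0]) => [/exists_inP [v vA /eqP h0] | no0].
  left; have [h1 h2] := case_deg0 hsym hirr vA (cards0_eq h0).
  by exists (brset e A [set v] set0); do ! split; try apply: sub.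
have ge1 v : v \in A -> 0 < #|nbA e A v|.
  by move=> vA; rewrite lt0n; apply: contra no0 => h; apply/exists_inP; exists v.
right; right.
case: (boolP [exists u in A, #|nbA e A u| == 1]) => [/exists_inP [u uA /cards1P [v hu]] | no1].
  have [vA euv hu'] := nb1P hu.
  have uN : u \in nbA e A v by rewrite nbA_in uA hsym.
  have : (#|nbA e A v| == 1) || (#|nbA e A v| == 2).
    by have := ge1 v vA; have := le2 v vA; case: #|nbA e A v| => [|[|[|]]].
  case/orP => [/cards1P [x hx] | /other /(_ uN) [w wu hw]].
    have hv : nbA e A v = [set u] by move: uN; rewrite hx inE => /eqP <-.
    left; have [h1 h2 h3 h4 h5] := case_edge hsym hirr uA hu hv.
    have [_ _ hv'] := nb1P hv.
    have [t' tt' hA'] := iso_edge hsym hirr uA vA euv hu' hv' hA.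
    exists t', (brset e A [set u] set0), (brset e A [set v] set0); do ! split => //.
      exact: noIM_sub h2 hA'.
    exact: noIM_sub h3 hA'.
  right; left; have [h1 h2 h3] := case_leaf hsym hirr uA hu hw wu.
  by exists (brset e A [set u] set0), (brset e A [set v] set0); do ! split; try apply: sub.
right; right.
have d2 v : v \in A -> #|nbA e A v| == 2.
  move=> vA; have := ge1 v vA; have := le2 v vA.
  have : #|nbA e A v| != 1 by apply: contra no1 => h; apply/exists_inP; exists v.
  by case: #|nbA e A v| => [|[|[|]]].
case/set0Pn: nA => v vA.
case/cards2P: (d2 v vA) => a [b [ab hv]].
have [aA eva bA evb _] := nb2P hv.
have [a' a'v ha] : exists2 a', a' != v & nbA e A a = [set v; a'].
  by apply: other; [exact: d2 | rewrite nbA_in vA hsym].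
have [b' b'v hb] : exists2 b', b' != v & nbA e A b = [set v; b'].
  by apply: other; [exact: d2 | rewrite nbA_in vA hsym].
have [h1 h2 h3 h4] := case_cycle hsym hirr htri vA hv ab ha a'v hb b'v.
by exists (brset e A [set v] set0), (brset e A [set a] set0), (brset e A [set b] [set a]); do ! split; try apply: sub.
Qed.

Local Open Scope ring_scope.

Lemma c_facts (R : realType) (c : R)
  (hc_root : c ^+ 6 - 2 * c ^+ 2 - 2 * c - 1 = 0)
  (hc_max : forall x : R, x ^+ 6 - 2 * x ^+ 2 - 2 * x - 1 = 0 -> x <= c) :
  7/5 <= c /\ c ^+ 2 <= 2.
Proof.
pose p : {poly R} := 'X^6 - 2%:P * 'X^2 - 2%:P * 'X - 1.
have hp x : p.[x] = x ^+ 6 - 2 * x ^+ 2 - 2 * x - 1.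
  by rewrite /p !hornerE.
have [x /andP[x1 x2] rx] : exists2 x, (7/5 : R) <= x <= 141/100 & root p x.
  apply: poly_ivt; first lra.
  rewrite !hp; apply/andP; split; lra.
have hx := hc_max x. rewrite -hp (eqP rx) in hx.
have c1 : 7/5 <= c by apply: le_trans x1 (hx erefl).
split => //.
rewrite leNgt; apply/negP => hc2.
have : c ^+ 6 - 2 * c ^+ 2 - 2 * c - 1 > 0; last by rewrite hc_root ltxx.
have -> : c ^+ 6 = (c^+2)^+3 by rewrite -exprM.
set y := c ^+ 2 in hc2 *.
have hcy : c * c = y by rewrite /y expr2.
nra.
Qed.

Lemma comb (R : realFieldType) (x y1 y2 y3 K Z a1 a2 a3 q : R) :
  0 <= K -> x <= y1 + y2 + y3 -> y1 * K <= Z * a1 -> y2 * K <= Z * a2 -> y3 * K <= Z * a3 ->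
  0 <= Z -> a1 + a2 + a3 <= q -> x * K <= Z * q.
Proof.
move=> K0 hx h1 h2 h3 Z0 hq.
have : x * K <= (y1 + y2 + y3) * K by apply: ler_wpM2r.
have : Z * (a1 + a2 + a3) <= Z * q by apply: ler_wpM2l.
rewrite !mulrDl !mulrDr; lra.
Qed.

Lemma main_bound (R : realType) (c : R) (c1 : 7/5 <= c) (c2 : c ^+ 2 <= 2)
  (T : finType) (e : rel T) (hsym : symmetric e) (hirr : irreflexive e)
  (htri : triangle_free e) :
  forall m (A : {set T}) t, (#|A| <= m)%N -> noIM e A t ->
    (misA e A)%:R * c ^+ (2 * t) <= 2 ^+ t * c ^+ #|A|.
Proof.
have cpos : 0 < c by lra.
have cge1 : 1 <= c by lra.
have mono j k : (j <= k)%N -> c ^+ j <= c ^+ k by move=> jk; apply: ler_weXn2l.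
have f1 : c ^+ 3 + 1 <= c ^+ 4.
  have -> : c ^+ 4 = c * c ^+ 3 by rewrite exprS.
  have h3 : (7/5) ^+ 3 <= c ^+ 3 by apply: lerXn2r; rewrite ?nnegrE //; lra.
  have : 0 <= (c - 1) * (c ^+ 3 - (7/5)^+3) by apply: mulr_ge0; lra.
  lra.
have f2 : c + 1 <= c ^+ 3.
  have -> : c ^+ 3 = c * c ^+ 2 by rewrite exprS.
  have h2 : (7/5) ^+ 2 <= c ^+ 2 by apply: lerXn2r; rewrite ?nnegrE //; lra.
  have : 0 <= c * (c ^+ 2 - (7/5)^+2) by apply: mulr_ge0; lra.
  lra.
have f3 : 2 * c + 1 <= c ^+ 4.
  have -> : c ^+ 4 = c * c ^+ 3 by rewrite exprS.
  have h3 : (7/5) ^+ 3 <= c ^+ 3 by apply: lerXn2r; rewrite ?nnegrE //; lra.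
  have : 0 <= (c - 7/5) * (c ^+ 3 - (7/5)^+3) by apply: mulr_ge0; lra.
  lra.
have K0 t : 0 <= c ^+ (2 * t) by apply: exprn_ge0; lra.
have P0 t : 0 <= (2 : R) ^+ t by apply: exprn_ge0.
elim=> [|m IH] A t hm hA.
  move: hm; rewrite leqn0 => /eqP /cards0_eq ->; rewrite misA0 cards0 expr0 mulr1 mul1r.
  by rewrite exprM; apply: lerXn2r; rewrite ?nnegrE //; apply: exprn_ge0; lra.
have hB B t' k : noIM e B t' -> (#|B| + k.+1 <= #|A|)%N ->
    (misA e B)%:R * c ^+ (2 * t') <= 2 ^+ t' * c ^+ (#|A| - k.+1).
  move=> hB hk; apply: le_trans (IH B t' _ hB) _.
    lia.
  by apply: ler_wpM2l => //; apply: mono; lia.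
have hB' B t' k j : noIM e B t' -> (#|B| + k <= #|A| + j)%N -> (j < k)%N -> (k <= #|A|)%N ->
    (misA e B)%:R * c ^+ (2 * t') <= 2 ^+ t' * c ^+ (#|A| - k) * c ^+ j.
  move=> hBn hk hj hkA; apply: le_trans (IH B t' _ hBn) _; first lia.
  rewrite -mulrA -exprD; apply: ler_wpM2l => //; apply: mono; lia.
have cexpA k : (k <= #|A|)%N -> c ^+ #|A| = c ^+ (#|A| - k) * c ^+ k.
  by move=> h1; rewrite -exprD; congr (_ ^+ _); lia.
have natS (a b : nat) : (a <= b)%N -> (a%:R : R) <= b%:R + 0 + 0.
  by move=> h; rewrite !addr0 ler_nat.
have natS2 (a b1 b2 : nat) : (a <= b1 + b2)%N -> (a%:R : R) <= b1%:R + b2%:R + 0.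
  by move=> h; rewrite addr0 -natrD ler_nat.
have natS3 (a b1 b2 b3 : nat) : (a <= b1 + b2 + b3)%N -> (a%:R : R) <= b1%:R + b2%:R + b3%:R.
  by move=> h; rewrite -!natrD ler_nat.
have z0 (Z : R) : 0 * c ^+ (2 * t) <= Z * 0 by rewrite mul0r mulr0.
have Zp t' k : 0 <= 2 ^+ t' * c ^+ (#|A| - k) by rewrite mulr_ge0 // exprn_ge0 //; lra.
case: (dichotomy hsym hirr htri hA) => [A0 | [[A1 [h1 s1 hm1]] |
   [[A1 [A2 [h1 h2 [s1 s2] hm12]]] | [[t' [A1 [A2 [tt' h1 h2 [s1 s2] hm12]]]] |
   [[A1 [A2 [h1 h2 [s1 s2] hm12]]] | [A1 [A2 [A3 [h1 h2 h3 [s1 s2 s3] hm123]]]]]]]]].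
- rewrite A0 misA0 cards0 expr0 mulr1 mul1r.
  by rewrite exprM; apply: lerXn2r; rewrite ?nnegrE //; apply: exprn_ge0; lra.
- have e1 := hB' A1 t 1 0 h1 ltac:(lia) erefl ltac:(lia).
  rewrite (cexpA 1); last lia; rewrite mulrA.
  apply: (comb (K0 t) (natS _ _ hm1) e1 (z0 _) (z0 _) (Zp _ _)).
  by rewrite !addr0 expr0 expr1.
- have e1 := hB' A1 t 4 0 h1 ltac:(lia) erefl ltac:(lia).
  have e2 := hB' A2 t 4 3 h2 ltac:(lia) erefl ltac:(lia).
  rewrite (cexpA 4); last lia; rewrite mulrA.
  apply: (comb (K0 t) (natS2 _ _ _ hm12) e1 e2 (z0 _) (Zp _ _)).
  by rewrite addr0 expr0; lra.
- subst t.
  have e1 := hB' A1 t' 2 0 h1 ltac:(lia) erefl ltac:(lia).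
  have e2 := hB' A2 t' 2 0 h2 ltac:(lia) erefl ltac:(lia).
  have z0' (Z : R) : 0 * c ^+ (2 * t') <= Z * 0 by rewrite mul0r mulr0.
  have := comb (K0 t') (natS2 _ _ _ hm12) e1 e2 (z0' _) (Zp _ _) (lexx _).
  move=> h; rewrite expr0 !addr0 in h.
  rewrite (cexpA 2); last lia.
  set Z := 2 ^+ t' * c ^+ (#|A| - 2) in h *.
  set W := (misA e A)%:R * c ^+ (2 * t') in h.
  have c20 : 0 <= c ^+ 2 by apply: exprn_ge0; lra.
  have -> : (misA e A)%:R * c ^+ (2 * t'.+1) = W * c ^+ 2.
    by rewrite /W mulnS exprD; ring.
  have -> : 2 ^+ t'.+1 * (c ^+ (#|A| - 2) * c ^+ 2) = (Z * (1 + 1)) * c ^+ 2.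
    by rewrite /Z exprS; ring.
  by apply: ler_wpM2r.
- have e1 := hB' A1 t 3 1 h1 ltac:(lia) erefl ltac:(lia).
  have e2 := hB' A2 t 3 0 h2 ltac:(lia) erefl ltac:(lia).
  rewrite (cexpA 3); last lia; rewrite mulrA.
  apply: (comb (K0 t) (natS2 _ _ _ hm12) e1 e2 (z0 _) (Zp _ _)).
  by rewrite addr0 expr0 expr1; lra.
- have e1 := hB' A1 t 4 1 h1 ltac:(lia) erefl ltac:(lia).
  have e2 := hB' A2 t 4 1 h2 ltac:(lia) erefl ltac:(lia).
  have e3 := hB' A3 t 4 0 h3 ltac:(lia) erefl ltac:(lia).
  rewrite (cexpA 4); last lia; rewrite mulrA.
  apply: (comb (K0 t) (natS3 _ _ _ _ hm123) e1 e2 e3 (Zp _ _)).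
  by rewrite expr0 expr1; lra.
Qed.

Theorem mainTheorem2 (R : realType) (c : R)
  (hc_root : c ^+ 6 - 2 * c ^+ 2 - 2 * c - 1 = 0)
  (hc_max : forall x : R, x ^+ 6 - 2 * x ^+ 2 - 2 * x - 1 = 0 -> x <= c)
  (n t : nat) (hn : (1 <= n)%N) (ht : (2 * t <= n)%N)
  (e : rel 'I_n) (hG : simple_graph e) (htri : triangle_free e)
  (hmatch : ~ has_induced_matching_of_size e t.+1) :
  (mis e)%:R <= 2 ^+ t * c ^+ (n - 2 * t).
Proof.
have [c1 c2] := c_facts hc_root hc_max.
have hG' := hG; case: hG' => hsym hirr.
have hA : noIM e setT t.
  move=> M hM _; apply/negP => /eqP hs; apply: hmatch; exists M; rewrite hM hs eqxx.
  done.
have := main_bound c1 c2 hsym hirr htri (leqnn #|[set: 'I_n]|) hA.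
rewrite -mis_misA // cardsT card_ord.
have -> : c ^+ n = c ^+ (n - 2 * t) * c ^+ (2 * t) by rewrite -exprD subnK.
rewrite mulrA ler_pM2r //; apply: exprn_gt0; lra.
Qed.
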